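(* In any execution of the algorithm described in the context, in every round $r>0$ non-faulty processes only sign and broadcast AUX messages whose binary value was proposed by some non-faulty process.
   Context: Model. There are $n$ processes $p_1,\dots,p_n$ ($i$ is the index of $p_i$) communicating over an asynchronous, reliable, point-to-point network: every pair of processes is connected by a channel, message delays are finite but unbounded, and the network does not lose, duplicate, modify or create messages. ''Broadcast'' means sending the message to every process (including oneself). Messages are signed with unforgeable digital signatures ($\langle m\rangle_j$ denotes message $m$ signed by $p_j$); malformed messages or messages with invalid signatures are ignored. Up to $t$ processes are Byzantine (faulty) and may behave arbitrarily and collude, but cannot forge signatures of other processes; the remaining processes are non-faulty and follow the algorithm. It is assumed that $t<n/3$. Each non-faulty process $p_i$ starts with a proposal $v_i\in\{0,1\}$. Algorithm. Messages are of the form $\mathrm{AUX}[r](v)$ with round $r\in\mathbb{N}$ and $v\in\{0,1\}$, sent as a pair $(\langle \mathrm{AUX}[r](v)\rangle_j,\mathit{proofs})$ where $\mathit{proofs}$ is a set of signed AUX messages. The predicate $\mathsf{is\_valid}(r,est,\mathit{proofs})$ is: if $r=0$ return true; if $r=1$ return true iff $\mathit{proofs}$ contains signed $\mathrm{AUX}[0](est)$ messages from $t+1$ different processes; otherwise let $b=(r-1)\bmod 2$; if $est=b$, return true iff ($r=2$ and $\mathit{proofs}$ contains signed $\mathrm{AUX}[0](b)$ from $t+1$ different processes) or ($\mathit{proofs}$ contains signed $\mathrm{AUX}[r-2](b)$ from $n-t$ different processes); if $est\neq b$, return true iff $\mathit{proofs}$ contains signed $\mathrm{AUX}[r-1](\neg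 b)$ from $n-t$ different processes. Each process $p_i$ with proposal $v_i$ keeps a round counter $r_i$, a set $\mathit{aux\_values}_i$ of signed AUX messages, and timers indexed by naturals (timers $2r$ and $2r+1$ belong to round $r$; starting an already started or expired timer does nothing). It sets $r_i:=0$, $\mathit{aux\_values}_i:=\emptyset$, broadcasts $(\langle\mathrm{AUX}[0](v_i)\rangle_i,\emptyset)$, then repeats forever: (1) $r_i:=r_i+1$; (2) if $i=r_i\bmod n$ (coordinator), run Broadcast; (3) start timer $2r_i$ and wait until it expires; (4) if $i\ne r_i\bmod n$, run Broadcast; (5) wait until $\mathit{aux\_values}_i$ contains round-$r_i$ AUX messages from $n-t$ different processes; (6) start timer $2r_i+1$ and wait until it expires; (7) with $b_i=r_i\bmod 2$, if $\mathit{aux\_values}_i$ contains $\mathrm{AUX}[r_i](b_i)$ from $n-t$ different processes, decide $b_i$ (if not yet decided). Broadcast: let $\mathit{values}_i$ be the set of $v\in\{0,1\}$ such that $\mathsf{is\_valid}(r_i,v,S)$ holds for some $S\subseteq\mathit{aux\_values}_i$; let $bv=(r_i+1)\bmod 2$; if $p_i$ received from $p_{r_i\bmod n}$ a message $(\langle\mathrm{AUX}[r_i](p)\rangle_{r_i\bmod n},\cdot)$ with $p\in\mathit{values}_i$ then $est_i:=p$, else if $bv\in\mathit{values}_i$ then $est_i:=bv$, else $est_i:=\neg bv$; choose $\mathit{proofs}\subseteq\mathit{aux\_values}_i$ with $\mathsf{is\_valid}(r_i,est_i,\mathit{proofs})$ and broadcast $(\langle\mathrm{AUX}[r_i](est_i)\rangle_i,\mathit{proofs})$.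 On receiving $(\langle\mathrm{AUX}[r_j](est_j)\rangle_j,\mathit{proofs})$: if $\mathsf{is\_valid}(r_j,est_j,\mathit{proofs})$, add the signed message and the messages of $\mathit{proofs}$ needed to satisfy the predicate to $\mathit{aux\_values}_i$ (such messages are called valid). Then let $\rho_i$ be the largest round for which $\mathit{aux\_values}_i$ contains messages from $t+1$ different processes, and set every timer with index $\le 2\rho_i$ to expired. *)

(* Defs.v *)
From mathcomp Require Import all_boot.
Set Implicit Arguments. Unset Strict Implicit. Unset Printing Implicit Defensive.

(* Processes are p_1..p_n, represented by i : 'I_n with index (val i).+1. *)

(* A signed message <AUX[r](v)>_j is the triple (j, (r, v)). *)
Definition sAux (n : nat) := ('I_n * (nat * bool))%type.
Definition mkAux n (j : 'I_n) (r : nat) (v : bool) : sAux n := (j, (r, v)).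
Definition signer n (s : sAux n) : 'I_n := s.1.
Definition srnd n (s : sAux n) : nat := s.2.1.
Definition sbit n (s : sAux n) : bool := s.2.2.

Definition nsig n (S : seq (sAux n)) (r : nat) (b : bool) : nat :=
  size (undup [seq signer s | s <- S & (srnd s == r) && (sbit s == b)]).
Definition nsig_round n (S : seq (sAux n)) (r : nat) : nat :=
  size (undup [seq signer s | s <- S & srnd s == r]).

(* the bit x mod 2 in {0,1} is represented by the boolean odd x *)
Definition is_valid (n t r : nat) (est : bool) (S : seq (sAux n)) : bool :=
  if r == 0 then true
  else if r == 1 then t.+1 <= nsig S 0 est
  else let b := odd r.-1 in
       if est == b then ((r == 2) && (t.+1 <= nsig S 0 b)) || (n - t <= nsig S (r - 2) b)
       else n - t <= nsig S r.-1 (~~ b).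

Definition Msg (n : nat) := ('I_n * 'I_n * sAux n * seq (sAux n))%type.
Definition msender n (m : Msg n) : 'I_n := m.1.1.1.
Definition mdest n (m : Msg n) : 'I_n := m.1.1.2.
Definition mmain n (m : Msg n) : sAux n := m.1.2.
Definition mproofs n (m : Msg n) : seq (sAux n) := m.2.

Inductive tstate := TNot | TRun | TExp.

(* program counter of a non-faulty process:
   PInit  : not yet started
   PB2    : at step (2) (coordinator, about to run Broadcast)
   PT1    : at step (3), waiting for timer 2r
   PB4    : at step (4) (non-coordinator, about to run Broadcast)
   PQ     : at step (5), waiting for n-t round-r AUX messages
   PT2    : at step (6), waiting for timer 2r+1 *)
Inductive phase := PInit | PB2 | PT1 | PB4 | PQ | PT2.

Record lstate (n : nat) := LS {
  pc : phase;
  rnd : nat;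
  aux : seq (sAux n);
  inbox : seq (Msg n);
  timers : nat -> tstate;
  dec : option bool }.

Record gstate (n : nat) := GS {
  loc : 'I_n -> lstate n;       (* local states (meaningful for non-faulty) *)
  sent : seq (Msg n);
  delivered : seq nat }.        (* indices in [sent] of delivered messages *)

Definition upd n (f : 'I_n -> lstate n) (i : 'I_n) (x : lstate n) :=
  fun j => if j == i then x else f j.

Definition is_coord n (i : 'I_n) (r : nat) : bool := (val i).+1 == r %% n.

Definition start_timer (tm : nat -> tstate) (k : nat) : nat -> tstate :=
  fun k' => if (k' == k) && (if tm k is TNot then true else false) then TRun else tm k'.

(* set every timer with index <= 2 rho to expired, rho being the largest
   round for which A contains messages from t+1 different processes *)
Definition expire n (t : nat) (A : seq (sAux n)) (tm : nat -> tstate) : nat -> tstate :=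
  fun k => if has (fun s => (k <= 2 * srnd s) && (t.+1 <= nsig_round A (srnd s))) A
           then TExp else tm k.

Definition bcast n (i : 'I_n) (s : sAux n) (P : seq (sAux n)) : seq (Msg n) :=
  [seq (i, d, s, P) | d <- enum 'I_n].

Definition values n t (st : lstate n) (v : bool) : Prop :=
  exists S, all (fun s => s \in aux st) S /\ is_valid t (rnd st) v S.

Definition coord_msg n (st : lstate n) (p : bool) : Prop :=
  exists m, m \in inbox st /\ is_coord (msender m) (rnd st) /\
    signer (mmain m) = msender m /\ srnd (mmain m) = rnd st /\ sbit (mmain m) = p.

Definition est_choice n t (st : lstate n) (est : bool) : Prop :=
  let bv := odd (rnd st).+1 in
  (coord_msg st est /\ values t st est) \/
  ((~ exists p, coord_msg st p /\ values t st p) /\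
   (values t st bv -> est = bv) /\ (~ values t st bv -> est = ~~ bv)).

Definition enter_round n (i : 'I_n) (st : lstate n) (r : nat) : lstate n :=
  if is_coord i r then LS PB2 r (aux st) (inbox st) (timers st) (dec st)
  else LS PT1 r (aux st) (inbox st) (start_timer (timers st) (2 * r)) (dec st).

(* the adversary knows a signed message if it occurs in a message delivered
   to some faulty process *)
Definition known n (F : {set 'I_n}) (g : gstate n) (s : sAux n) : Prop :=
  exists k m, k \in delivered g /\ onth (sent g) k = Some m /\
    mdest m \in F /\ s \in mmain m :: mproofs m.

Inductive step (n t : nat) (F : {set 'I_n}) (v : 'I_n -> bool) :
    gstate n -> gstate n -> Prop :=
| s_start g i : i \notin F -> pc (loc g i) = PInit ->
    let st := loc g i in
    step t F v g
      (GS (upd (loc g) i (enter_round i (LS PInit 0 [::] (inbox st) (timers st) (dec st)) 1))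
          (sent g ++ bcast i (mkAux i 0 (v i)) [::]) (delivered g))
| s_b2 g i est P : i \notin F -> pc (loc g i) = PB2 ->
    let st := loc g i in
    est_choice t st est -> all (fun s => s \in aux st) P -> is_valid t (rnd st) est P ->
    step t F v g
      (GS (upd (loc g) i (LS PT1 (rnd st) (aux st) (inbox st)
                            (start_timer (timers st) (2 * rnd st)) (dec st)))
          (sent g ++ bcast i (mkAux i (rnd st) est) P) (delivered g))
| s_t1 g i : i \notin F -> pc (loc g i) = PT1 ->
    let st := loc g i in
    timers st (2 * rnd st) = TExp ->
    step t F v g
      (GS (upd (loc g) i (LS (if is_coord i (rnd st) then PQ else PB4) (rnd st) (aux st)
                            (inbox st) (timers st) (dec st)))
          (sent g) (delivered g))
| s_b4 g i est P : i \notin F -> pc (loc g i) = PB4 ->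
    let st := loc g i in
    est_choice t st est -> all (fun s => s \in aux st) P -> is_valid t (rnd st) est P ->
    step t F v g
      (GS (upd (loc g) i (LS PQ (rnd st) (aux st) (inbox st) (timers st) (dec st)))
          (sent g ++ bcast i (mkAux i (rnd st) est) P) (delivered g))
| s_q g i : i \notin F -> pc (loc g i) = PQ ->
    let st := loc g i in
    n - t <= nsig_round (aux st) (rnd st) ->
    step t F v g
      (GS (upd (loc g) i (LS PT2 (rnd st) (aux st) (inbox st)
                            (start_timer (timers st) (2 * rnd st).+1) (dec st)))
          (sent g) (delivered g))
| s_t2 g i : i \notin F -> pc (loc g i) = PT2 ->
    let st := loc g i in
    timers st (2 * rnd st).+1 = TExp ->
    let b := odd (rnd st) in
    let d := if (if dec st is None then true else false) && (n - t <= nsig (aux st) (rnd st) b)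
             then Some b else dec st in
    step t F v g
      (GS (upd (loc g) i (enter_round i (LS PT2 (rnd st) (aux st) (inbox st) (timers st) d)
                                        (rnd st).+1))
          (sent g) (delivered g))
| s_timer g i k : i \notin F -> timers (loc g i) k = TRun ->
    let st := loc g i in
    step t F v g
      (GS (upd (loc g) i (LS (pc st) (rnd st) (aux st) (inbox st)
                            (fun k' => if k' == k then TExp else timers st k') (dec st)))
          (sent g) (delivered g))
| s_recv_valid g k m S : onth (sent g) k = Some m -> k \notin delivered g ->
    mdest m \notin F -> pc (loc g (mdest m)) <> PInit ->
    is_valid t (srnd (mmain m)) (sbit (mmain m)) (mproofs m) ->
    all (fun s => s \in mproofs m) S ->
    is_valid t (srnd (mmain m)) (sbit (mmain m)) S ->
    let st := loc g (mdest m) in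
    let A := aux st ++ mmain m :: S in
    step t F v g
      (GS (upd (loc g) (mdest m) (LS (pc st) (rnd st) A (m :: inbox st)
                                     (expire t A (timers st)) (dec st)))
          (sent g) (k :: delivered g))
| s_recv_invalid g k m : onth (sent g) k = Some m -> k \notin delivered g ->
    mdest m \notin F -> pc (loc g (mdest m)) <> PInit ->
    ~~ is_valid t (srnd (mmain m)) (sbit (mmain m)) (mproofs m) ->
    let st := loc g (mdest m) in
    step t F v g
      (GS (upd (loc g) (mdest m) (LS (pc st) (rnd st) (aux st) (m :: inbox st)
                                     (expire t (aux st) (timers st)) (dec st)))
          (sent g) (k :: delivered g))
| s_recv_faulty g k m : onth (sent g) k = Some m -> k \notin delivered g ->
    mdest m \in F ->
    step t F v g (GS (loc g) (sent g) (k :: delivered g))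
| s_byz g j d s P : j \in F ->
    (forall s', s' \in s :: P -> signer s' \in F \/ known F g s') ->
    step t F v g (GS (loc g) (sent g ++ [:: (j, d, s, P)]) (delivered g)).

Definition init_gstate (n : nat) : gstate n :=
  GS (fun _ => LS PInit 0 [::] [::] (fun _ => TNot) None) [::] [::].

Inductive reachable (n t : nat) (F : {set 'I_n}) (v : 'I_n -> bool) : gstate n -> Prop :=
| r_init : reachable t F v (init_gstate n)
| r_step g g' : reachable t F v g -> step t F v g g' -> reachable t F v g'.

(* Main.v *)
Require Import Defs.
From mathcomp Require Import all_boot.
From mathcomp Require Import zify.
Set Implicit Arguments. Unset Strict Implicit. Unset Printing Implicit Defensive.

Definition good n (F : {set 'I_n}) (v : 'I_n -> bool) (b : bool) : Prop :=
  exists2 j : 'I_n, j \notin F & v j = b.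

Definition goodsig n (F : {set 'I_n}) (v : 'I_n -> bool) (s : sAux n) : Prop :=
  signer s \notin F -> good F v (sbit s).

Lemma onth_in (T : eqType) (s : seq T) k x : onth s k = Some x -> x \in s.
Proof.
move=> h; have hk : k < size s by rewrite -onthTE h.
by rewrite -(@onth_nth _ x x s k h) mem_nth.
Qed.

Lemma count_lemma n (F : {set 'I_n}) (P : seq (sAux n)) r b :
  #|F| < nsig P r b ->
  exists s, [/\ s \in P, srnd s = r, sbit s = b & signer s \notin F].
Proof.
move=> H.
case: (boolP (has (fun s => [&& srnd s == r, sbit s == b & signer s \notin F]) P)).
  by move/hasP=> [s sP /and3P[/eqP hr /eqP hb hf]]; exists s.
move=> hn; exfalso.
have : nsig P r b <= #|F|.
  rewrite /nsig cardE; apply: uniq_leq_size; first exact: undup_uniq.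
  move=> x; rewrite mem_undup => /mapP [s]; rewrite mem_filter.
  move=> /andP [/andP[/eqP hr /eqP hb] sP] ->; rewrite mem_enum.
  apply: contraT => hx.
  move/hasPn: hn => /(_ s sP); rewrite hr hb hx !eqxx //.
by rewrite leqNgt H.
Qed.

Lemma valid_good n t (F : {set 'I_n}) v r est (P : seq (sAux n)) :
  3 * t < n -> #|F| <= t -> 0 < r -> is_valid t r est P ->
  (forall s, s \in P -> goodsig F v s) -> good F v est.
Proof.
move=> hn hF hr hv hP.
have key : forall r' b', #|F| < nsig P r' b' -> good F v b'.
  move=> r' b' /count_lemma [s [sP _ <- sF]]; exact: hP sP sF.
have h1 : forall k, t.+1 <= k -> #|F| < k.
  by move=> k hk; apply: leq_ltn_trans hF hk.
have h2 : forall k, n - t <= k -> #|F| < k.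
  move=> k hk; apply: leq_ltn_trans hF _; apply: leq_trans hk.
  lia.
move: hv; rewrite /is_valid.
case: r hr => [//|[|r]] _ /=.
  by move=> /h1 /key.
case: eqP => [-> | hne].
  move=> /orP [/andP [_ /h1 /key] | /h2 /key] //.
move=> /h2 /key.
by case: est hne; case: (odd r).
Qed.

Definition Inv n (t : nat) (F : {set 'I_n}) (v : 'I_n -> bool) (g : gstate n) : Prop :=
  [/\ (forall m s, m \in sent g -> s \in mmain m :: mproofs m -> goodsig F v s),
      (forall i s, s \in aux (loc g i) -> goodsig F v s)
    & (forall i, pc (loc g i) = PInit \/ 0 < rnd (loc g i))].

Lemma mem_bcast n (i : 'I_n) s P m : m \in bcast i s P -> mmain m = s /\ mproofs m = P.
Proof. by case/mapP => d _ ->. Qed.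

Lemma enter_aux n (i : 'I_n) st r : aux (enter_round i st r) = aux st.
Proof. by rewrite /enter_round; case: ifP. Qed.
Lemma enter_rnd n (i : 'I_n) st r : rnd (enter_round i st r) = r.
Proof. by rewrite /enter_round; case: ifP. Qed.

Lemma bc_lemma n t (F : {set 'I_n}) (v : 'I_n -> bool) (g : gstate n) :
  3 * t < n -> #|F| <= t -> 
  (forall m s, m \in sent g -> s \in mmain m :: mproofs m -> goodsig F v s) ->
  forall i r est P, i \notin F -> 0 < r -> is_valid t r est P ->
   (forall s, s \in P -> goodsig F v s) ->
   forall m s, m \in sent g ++ bcast i (mkAux i r est) P -> s \in mmain m :: mproofs m ->
   goodsig F v s.
Proof.
move=> hn hF hA.
  move=> i r est P hi hr hv hP m s; rewrite mem_cat => /orP [hm|/mem_bcast [-> ->]]; first exact: hA hm.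
rewrite in_cons => /orP [/eqP -> | /hP //].
move=> _; exact: valid_good hn hF hr hv hP.
Qed.

Lemma inv_step n t (F : {set 'I_n}) (v : 'I_n -> bool) (g g' : gstate n) : 3 * t < n -> #|F| <= t ->
  @Inv n t F v g -> step t F v g g' -> Inv t F v g'.
Proof.
move=> hn hF hI st; case: st hI.
- move=> g0 i hi hpc st0 [hA hB hC]; split => /=.
  + move=> m s; rewrite mem_cat => /orP [hm|/mem_bcast [-> ->]]; first exact: hA hm.
    rewrite mem_seq1 => /eqP -> _; by exists i.
  + by move=> j s; rewrite /upd; case: eqP => [_|_]; [rewrite enter_aux | apply: hB].
  + by move=> j; rewrite /upd; case: eqP => [_|_]; [rewrite enter_rnd; right | apply: hC].
- move=> g0 i est P hi hpc st0 hch hPa hv [hA hB hC]; split => /=.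
  + apply: (bc_lemma hn hF hA) hv _ => //; first by case: (hC i) => [hh|hh]; [rewrite hpc in hh | exact: hh].
    by move=> s sP; apply: (hB i); move/allP: hPa; apply.
  + by move=> j s; rewrite /upd; case: eqP => [_|_]; [apply: hB | apply: hB].
  + by move=> j; rewrite /upd; case: eqP => [_|_] /=; [right; case: (hC i) => [hh|hh]; [rewrite hpc in hh | exact: hh] | apply: hC].
- move=> g0 i hi hpc st0 hT [hA hB hC]; split => //=.
  + by move=> j s; rewrite /upd; case: eqP => [_|_]; [apply: hB | apply: hB].
  + by move=> j; rewrite /upd; case: eqP => [_|_] /=; [right; case: (hC i) => [hh|hh]; [rewrite hpc in hh | exact: hh] | apply: hC].
- move=> g0 i est P hi hpc st0 hch hPa hv [hA hB hC]; split => /=.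
  + apply: (bc_lemma hn hF hA) hv _ => //; first by case: (hC i) => [hh|hh]; [rewrite hpc in hh | exact: hh].
    by move=> s sP; apply: (hB i); move/allP: hPa; apply.
  + by move=> j s; rewrite /upd; case: eqP => [_|_]; [apply: hB | apply: hB].
  + by move=> j; rewrite /upd; case: eqP => [_|_] /=; [right; case: (hC i) => [hh|hh]; [rewrite hpc in hh | exact: hh] | apply: hC].
- move=> g0 i hi hpc st0 hq [hA hB hC]; split => //=.
  + by move=> j s; rewrite /upd; case: eqP => [_|_]; [apply: hB | apply: hB].
  + by move=> j; rewrite /upd; case: eqP => [_|_] /=; [right; case: (hC i) => [hh|hh]; [rewrite hpc in hh | exact: hh] | apply: hC].
- move=> g0 i hi hpc st0 hT b0 d0 [hA hB hC]; split => //=.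
  + by move=> j s; rewrite /upd; case: eqP => [_|_]; [rewrite enter_aux; apply: hB | apply: hB].
  + by move=> j; rewrite /upd; case: eqP => [_|_]; [rewrite enter_rnd; right | apply: hC].
- move=> g0 i k hi hT st0 [hA hB hC]; split => //=.
  + by move=> j s; rewrite /upd; case: eqP => [_|_]; [apply: hB | apply: hB].
  + by move=> j; rewrite /upd; case: eqP => [_|_] /=; [apply: hC | apply: hC].
- move=> g0 k m S hk _ hd hpc hv hS hvS st0 A0 [hA hB hC]; split => //=.
  + move=> j s; rewrite /upd; case: eqP => [_|_]; last by apply: hB.
    rewrite /= mem_cat => /orP [/hB //|]; rewrite inE => /orP [/eqP ->|sS].
      by apply: (hA m); [exact: onth_in hk | rewrite inE eqxx].
    apply: (hA m); first exact: onth_in hk.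
    by rewrite inE; apply/orP; right; move/allP: hS; apply.
  + by move=> j; rewrite /upd; case: eqP => [_|_] /=; [apply: hC | apply: hC].
- move=> g0 k m hk _ hd hpc hv st0 [hA hB hC]; split => //=.
  + by move=> j s; rewrite /upd; case: eqP => [_|_]; [apply: hB | apply: hB].
  + by move=> j; rewrite /upd; case: eqP => [_|_] /=; [apply: hC | apply: hC].
- by move=> g0 k m hk _ hd [hA hB hC]; split.
- move=> g0 j d s P hj hk [hA hB hC]; split => //=.
  move=> m s'; rewrite mem_cat => /orP [hm|]; first exact: hA hm; rewrite inE => /eqP -> /= hs'.
  case: (hk s' hs') => [hsF hnF|[k0 [m0 [_ [h0 [_ hin]]]]]]; first by rewrite hsF in hnF.
  exact: (hA m0 s' (onth_in h0) hin).
Qed.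

Theorem lemma2 (n t : nat) (F : {set 'I_n}) (v : 'I_n -> bool) (g : gstate n) :
  3 * t < n -> #|F| <= t -> reachable t F v g ->
  forall (m : Msg n) (s : sAux n),
    m \in sent g -> s \in mmain m :: mproofs m ->
    signer s \notin F -> 0 < srnd s ->
    exists2 j : 'I_n, j \notin F & v j = sbit s.
Proof.
move=> hn hF hr.
have : Inv t F v g.
  elim: hr => [|g0 g1 _ IH hs]; last exact: inv_step hn hF IH hs.
  by split => //= i; left.
move=> [hA _ _] m s hm hs hsF _.
exact: hA m s hm hs hsF.
Qed.
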